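(* Let $Q_1=\{q_1<q_2<q_3<\cdots\}$ and $Q_2=\{v_1<v_2<v_3<\cdots\}$ be sets of prime powers (greater than 1), the elements within each set being pairwise coprime. Let $S_1$ be the set of integers $q_1^{e_1}\cdots q_s^{e_s}$ with $s\ge0$, $q_i\in Q_1$, $e_i\in\mathbb Z_{\ge0}$, and $S_2$ likewise with $Q_2$. Let $\pi_i(x)=\#\{q\in Q_i:q\le x\}$. Let $h:\mathbb N\to\mathbb R_{\ge0}$ be non-increasing and put $V_i(x)=\sum_{n\in S_i,\ n\le x}h(n)$ for $i=1,2$. Then: (a) if $\pi_1(x)\ge\pi_2(x)$ for all $x\ge0$, then $V_1(x)\ge V_2(x)$ for all $x\ge0$; (b) if $x_0$ is a real number and $\pi_1(x)\ge\pi_2(x)$ for all $x\le x_0$, then $V_1(x)\ge V_2(x)$ for all $x\le x_0$. *)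

(* Defs.v *)
From HB Require Import structures.
From mathcomp Require Import all_boot all_order all_algebra.
From mathcomp Require Import boolp reals.
Set Implicit Arguments. Unset Strict Implicit. Unset Printing Implicit Defensive.
Import Order.TTheory GRing.Theory Num.Theory.
Local Open Scope ring_scope.

Definition prime_power (q : nat) : Prop :=
  exists p k : nat, prime p /\ (0 < k)%N /\ q = (p ^ k)%N.

Definition coprime_prime_power_set (Q : nat -> bool) : Prop :=
  (forall q, Q q -> prime_power q) /\
  (forall q q', Q q -> Q q' -> q <> q' -> coprime q q').

Definition inS (Q : nat -> bool) (n : nat) : Prop :=
  exists s : seq nat, all Q s /\ n = (\prod_(q <- s) q)%N.

Definition piQ {R : realType} (Q : nat -> bool) (x : R) : nat :=
  (\sum_(n < (Num.truncn x).+1 | Q n && (n%:R <= x)%R) 1)%N.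

Definition VQ {R : realType} (Q : nat -> bool) (h : nat -> R) (x : R) : R :=
  \sum_(n < (Num.truncn x).+1 | `[< inS Q n >] && (n%:R <= x)) h n.

(* Main.v *)
Require Import Defs.
From HB Require Import structures.
From mathcomp Require Import all_boot all_order all_algebra.
From mathcomp Require Import boolp reals.
Import Order.TTheory GRing.Theory Num.Theory.

Definition pq (q : nat) := pdiv q.
Definition kq (q : nat) := logn (pdiv q) q.
Definition ex (v n : nat) := logn (pq v) n %/ kq v.

Lemma pp_facts q : prime_power q -> [/\ prime (pq q), 0 < kq q & q = pq q ^ kq q].
Proof.
case=> p [k [pp [k0 ->]]]; rewrite /pq /kq.
case: k k0 => // k _; rewrite pdiv_pfactor // pfactorK //.
Qed.

Lemma pp_gt1 q : prime_power q -> 1 < q.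
Proof.
case/pp_facts => pp k0 ->. by rewrite -{1}(expn0 (pq q)) ltn_exp2l ?prime_gt1.
Qed.

Lemma logn_pp Q q v : coprime_prime_power_set Q -> Q q -> Q v ->
  logn (pq v) q = if q == v then kq v else 0.
Proof.
case=> HP HC Qq Qv; case: eqP => [->//|qv].
apply: logn_coprime.
have [pv _ Ev] := pp_facts _ (HP _ Qv).
have cqv := HC _ _ Qq Qv qv.
rewrite coprime_sym in cqv.
apply: coprime_dvdl cqv.
by rewrite /pq pdiv_dvd.
Qed.

Arguments logn_pp {Q q v}.

Lemma logn_prod (I : finType) (P : pred I) (g E : I -> nat) p :
  (forall i, P i -> 0 < g i) ->
  logn p (\prod_(i | P i) g i ^ E i) = \sum_(i | P i) E i * logn p (g i).
Proof.
move=> gpos.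
pose K y1 y2 := 0 < y1 /\ logn p y1 = y2.
suff []: K (\prod_(i | P i) g i ^ E i) (\sum_(i | P i) E i * logn p (g i)) by [].
apply: (big_rec2 K); first by split => //; rewrite logn1.
move=> i y1 y2 Pi [y1p <-]; split; first by rewrite muln_gt0 expn_gt0 gpos.
by rewrite lognM ?expn_gt0 ?gpos // lognX.
Qed.

Lemma ex_prod Q (I : finType) (P : pred I) (g E : I -> nat) :
  coprime_prime_power_set Q ->
  (forall i, P i -> Q (g i)) -> {in P &, injective g} ->
  forall j, P j -> ex (g j) (\prod_(i | P i) g i ^ E i) = E j.
Proof.
move=> HQ Qg ginj j Pj.
have gpos i : P i -> 0 < g i.
  by move=> Pi; apply: ltnW; apply: pp_gt1; apply: HQ.1; apply: Qg.
rewrite /ex logn_prod // (bigD1 j) //= big1 ?addn0.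
  rewrite (logn_pp HQ (Qg _ Pj) (Qg _ Pj)) eqxx mulnK //.
  by case: (pp_facts _ (HQ.1 _ (Qg _ Pj))).
move=> i /andP[Pi nij]; rewrite (logn_pp HQ (Qg _ Pi) (Qg _ Pj)).
case: eqP => [/(ginj _ _ Pi Pj) eij|]; last by rewrite muln0.
by rewrite eij eqxx in nij.
Qed.

Lemma prod_gt0 Q s : coprime_prime_power_set Q -> all Q s -> 0 < \prod_(q <- s) q.
Proof.
move=> HQ; elim: s => [|q s IH] /=; first by rewrite big_nil.
case/andP=> Qq As; rewrite big_cons muln_gt0 IH // andbT.
by apply: ltnW; apply: pp_gt1; apply: HQ.1.
Qed.

Lemma inS_gt0 Q n : coprime_prime_power_set Q -> inS Q n -> 0 < n.
Proof. by move=> HQ [s [As ->]]; apply: prod_gt0 HQ As. Qed.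

Lemma rep Q M n : coprime_prime_power_set Q -> inS Q n -> n < M ->
  n = \prod_(i < M | Q i) (i : nat) ^ ex i n.
Proof.
move=> HQ [s [As ->]]; elim: s As => [|q s IH] /=.
  move=> _ _; rewrite big_nil big1 // => i _.
  by rewrite /ex logn1 div0n expn0.
case/andP=> Qq As; rewrite big_cons => ltM.
set n' := \prod_(q0 <- s) q0 in IH ltM *.
have n'p : 0 < n' by apply: prod_gt0 HQ As.
have q1 : 1 < q by apply: pp_gt1; apply: HQ.1.
have qp : 0 < q by apply: ltnW.
have qM : q < M.
  by apply: leq_ltn_trans ltM; rewrite leq_pmulr.
have n'M : n' < M.
  by apply: leq_ltn_trans ltM; rewrite leq_pmull.
have exE (i : 'I_M) : Q i -> ex i (q * n') = (q == i) + ex i n'.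
  move=> Qi; rewrite /ex lognM // (logn_pp HQ Qq Qi).
  have kp : 0 < kq i by case: (pp_facts _ (HQ.1 _ Qi)).
  case: eqP => _ /=; last by rewrite add0n.
  by rewrite divnDl ?dvdnn // divnn kp.
rewrite (eq_bigr (fun i : 'I_M => i ^ (q == i) * i ^ ex i n')); last first.
  by move=> i Qi; rewrite exE // expnD.
rewrite big_split /= -IH //; congr (_ * _).
rewrite (bigD1 (Ordinal qM)) //= eqxx expn1 big1 ?muln1 // => i /andP[_ ni].
have -> : (q == i) = false.
  by apply/negbTE; apply: contra ni => /eqP qi; apply/eqP/val_inj; rewrite /= qi.
by rewrite expn0.
Qed.

Lemma inS1 (Q : nat -> bool) : inS Q 1.
Proof. by exists [::]; rewrite big_nil. Qed.

Lemma inS_mul (Q : nat -> bool) a b : inS Q a -> inS Q b -> inS Q (a * b).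
Proof.
move=> [s [As ->]] [t [At ->]]; exists (s ++ t).
by rewrite all_cat As At big_cat.
Qed.

Lemma inS_exp (Q : nat -> bool) q e : Q q -> inS Q (q ^ e).
Proof.
move=> Qq; elim: e => [|e IH]; first by rewrite expn0; apply: inS1.
rewrite expnS; apply: inS_mul IH.
by exists [:: q]; rewrite /= Qq big_seq1.
Qed.

Lemma inS_prod (Q : nat -> bool) (I : finType) (P : pred I) (F : I -> nat) :
  (forall i, P i -> inS Q (F i)) -> inS Q (\prod_(i | P i) F i).
Proof.
move=> H; apply: (big_ind (inS Q)) => //; [exact: inS1 | exact: inS_mul].
Qed.

Definition cnt (Q : nat -> bool) m := count Q (iota 0 m.+1).

Lemma cntS (Q : nat -> bool) m : cnt Q m.+1 = cnt Q m + Q m.+1.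
Proof. by rewrite /cnt -addn1 iotaD count_cat /= addn0 add0n. Qed.

Lemma cnt0 (Q : nat -> bool) : coprime_prime_power_set Q -> cnt Q 0 = 0.
Proof.
move=> HQ; rewrite /cnt /=; case Q0: (Q 0) => //.
by have := pp_gt1 _ (HQ.1 _ Q0).
Qed.

Lemma cnt_mono (Q : nat -> bool) m m' : m <= m' -> cnt Q m <= cnt Q m'.
Proof.
move=> /subnK <-; elim: (m' - m) => [|d IH] //.
by rewrite addSn cntS (leq_trans IH) ?leq_addr.
Qed.

Lemma cnt_strict (Q : nat -> bool) m m' : m < m' -> Q m' -> cnt Q m < cnt Q m'.
Proof.
case: m' => // m' lt Qm; rewrite cntS Qm addn1 ltnS; exact: cnt_mono.
Qed.

Arguments cnt_strict Q {m m'}.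

Lemma exists_match (Q1 Q2 : nat -> bool) v :
  coprime_prime_power_set Q1 -> coprime_prime_power_set Q2 ->
  cnt Q2 v <= cnt Q1 v -> Q2 v ->
  exists2 u, [&& Q1 u & u <= v] & cnt Q1 u = cnt Q2 v.
Proof.
move=> HQ1 HQ2 le Qv.
have ex : exists u, cnt Q2 v <= cnt Q1 u by exists v.
case: (ex_minnP ex) => u Hu Hmin.
have uv : u <= v by apply: Hmin.
have v0 : 0 < v by apply: ltnW; apply: pp_gt1; apply: HQ2.1.
have c2 : 0 < cnt Q2 v.
  by move: Qv; case: v v0 {le ex Hmin uv Hu} => // v _ Qv; rewrite cntS Qv addn1.
case: u Hu Hmin uv => [|u] Hu Hmin uv.
  by rewrite cnt0 // leqn0 in Hu; rewrite (eqP Hu) in c2.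
have lt : cnt Q1 u < cnt Q2 v.
  by rewrite ltnNge; apply/negP => /Hmin; rewrite ltnn.
move: Hu; rewrite cntS; case Qu: (Q1 u.+1) => /=.
  rewrite ?addn1 => Hu; exists u.+1; first by rewrite Qu uv.
  by apply/eqP; rewrite eqn_leq cntS Qu addn1 Hu lt.
by rewrite ?addn0 leqNgt lt.
Qed.

Local Open Scope ring_scope.

Lemma core (R : numDomainType) (Q1 Q2 : nat -> bool) (h : nat -> R)
  (HQ1 : coprime_prime_power_set Q1) (HQ2 : coprime_prime_power_set Q2)
  (h_ge0 : forall n, 0 <= h n)
  (h_noninc : forall m n, (m <= n)%N -> h n <= h m) (N : nat) :
  (forall m, (m <= N)%N -> (cnt Q2 m <= cnt Q1 m)%N) ->
  \sum_(n < N.+1 | `[< inS Q2 n >]) h n <= \sum_(n < N.+1 | `[< inS Q1 n >]) h n.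
Proof.
move=> Hc.
have : forall v : 'I_N.+1, exists u : 'I_N.+1,
    Q2 v -> [&& Q1 u, (u <= v)%N & cnt Q1 u == cnt Q2 v].
  move=> v; case Qv: (Q2 v); last by exists v.
  have [u /andP[Qu uv] E] := @exists_match Q1 Q2 v HQ1 HQ2 (Hc _ (ltn_ord v) : (cnt Q2 v <= cnt Q1 v)%N) Qv.
  have uN : (u < N.+1)%N by apply: leq_ltn_trans uv (ltn_ord v).
  by exists (Ordinal uN) => _; rewrite /= Qu uv E eqxx.
case/fin_all_exists => f Hf.
have finj : {in (fun i : 'I_N.+1 => Q2 i) &, injective (fun i => (f i : nat))}.
  move=> v w Qv Qw /val_inj E.
  have /and3P[_ _ /eqP Ev] := Hf v Qv.
  have /and3P[_ _ /eqP Ew] := Hf w Qw.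
  rewrite E Ew in Ev; apply/val_inj => /=.
  case: (ltngtP v w) => // vw.
    by have := cnt_strict Q2 vw Qw; rewrite Ev ltnn.
  by have := cnt_strict Q2 vw Qv; rewrite Ev ltnn.
pose phi n := (\prod_(i < N.+1 | Q2 i) (f i : nat) ^ ex i n)%N.
have fQ1 : forall i : 'I_N.+1, Q2 i -> Q1 (f i).
  by move=> i Qi; case/and3P: (Hf i Qi).
have phi_ex n (i : 'I_N.+1) : Q2 i -> ex (f i) (phi n) = ex i n.
  move=> Qi; exact: (@ex_prod Q1 _ (fun i : 'I_N.+1 => Q2 i)
                     (fun i => (f i : nat)) (fun i => ex i n) HQ1 fQ1 finj i Qi).
have phi_le n : inS Q2 n -> (n < N.+1)%N -> (phi n <= n)%N.
  move=> Sn nN; rewrite {2}(rep _ _ _ HQ2 Sn nN); apply: leq_prod => i Qi.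
  case: (ex i n) => [|e]; first by rewrite !expn0.
  by rewrite leq_exp2r //; case/and3P: (Hf i Qi).
have phi_S n : inS Q1 (phi n).
  by apply: inS_prod => i Qi; apply: inS_exp; apply: fQ1.
have phi_inj n n' : inS Q2 n -> (n < N.+1)%N -> inS Q2 n' -> (n' < N.+1)%N ->
    phi n = phi n' -> n = n'.
  move=> Sn nN Sn' nN' E.
  rewrite (rep _ _ _ HQ2 Sn nN) (rep _ _ _ HQ2 Sn' nN').
  apply: eq_bigr => i Qi; by rewrite -(phi_ex n) // -(phi_ex n') // E.
pose phi' (i : 'I_N.+1) : 'I_N.+1 := inord (phi i).
have phi'E (i : 'I_N.+1) : inS Q2 i -> (phi' i : nat) = phi i.
  move=> Si; rewrite inordK // ltnS (leq_trans (phi_le _ Si (ltn_ord i))) //.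
  by rewrite -ltnS.
pose A := [pred i : 'I_N.+1 | `[< inS Q2 i >]].
have injA : {in A &, injective phi'}.
  move=> i j /asboolP Si /asboolP Sj E; apply/val_inj.
  apply: (phi_inj _ _ Si (ltn_ord i) Sj (ltn_ord j)).
  by rewrite -phi'E // -phi'E // E.
apply: (@le_trans _ _ (\sum_(i in A) h (phi' i))).
  rewrite (eq_bigl (fun i => i \in A)) //; apply: ler_sum => i /asboolP Si.
  by apply: h_noninc; rewrite phi'E //; apply: phi_le.
rewrite -(big_imset (fun j : 'I_N.+1 => h j) injA) /= [X in _ <= X]big_mkcond [X in X <= _]big_mkcond /=.
apply: ler_sum => j _; case: ifP => [/imsetP[i /asboolP Si ->]|_].
  suff -> : `[< inS Q1 (phi' i) >] = true by [].
  by apply/asboolP; rewrite phi'E.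
by case: ifP.
Qed.

Lemma piQ_nat (R : realType) (Q : nat -> bool) m : piQ Q (m%:R : R) = cnt Q m.
Proof.
rewrite /piQ natrK (eq_bigl (fun n : 'I_m.+1 => Q n)); last first.
  by move=> n; rewrite ler_nat -ltnS ltn_ord andbT.
rewrite -(big_mkord (fun n => Q n) (fun _ => 1%N)) /index_iota subn0.
by rewrite sum1_count.
Qed.

Lemma VQ_neg (R : realType) (Q : nat -> bool) (h : nat -> R) x : x < 0 -> VQ Q h x = 0.
Proof.
move=> xn; rewrite /VQ big1 // => i /andP[_ ix].
by have := lt_le_trans xn (le_trans (ler0n _ i) ix); rewrite ltxx.
Qed.

Lemma VQ_pos (R : realType) (Q : nat -> bool) (h : nat -> R) x : 0 <= x ->
  VQ Q h x = \sum_(n < (Num.truncn x).+1 | `[< inS Q n >]) h n.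
Proof.
move=> x0; rewrite /VQ; apply: eq_bigl => n.
by rewrite -truncn_ge_nat // -ltnS ltn_ord andbT.
Qed.

Lemma perx (R : realType) (Q1 Q2 : nat -> bool) (h : nat -> R)
  (HQ1 : coprime_prime_power_set Q1) (HQ2 : coprime_prime_power_set Q2)
  (h_ge0 : forall n, 0 <= h n)
  (h_noninc : forall m n, (m <= n)%N -> h n <= h m) (x : R) :
  (forall m, (m%:R <= x) -> (piQ Q2 (m%:R : R) <= piQ Q1 (m%:R : R))%N) ->
  VQ Q2 h x <= VQ Q1 h x.
Proof.
move=> H; case: (ltP x 0) => x0; first by rewrite !VQ_neg.
rewrite !VQ_pos //; apply: core => // m mN.
by rewrite -!(piQ_nat R); apply: H; rewrite -truncn_ge_nat.
Qed.

Theorem lemma11 (R : realType) (Q1 Q2 : nat -> bool) (h : nat -> R)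
  (HQ1 : coprime_prime_power_set Q1) (HQ2 : coprime_prime_power_set Q2)
  (h_ge0 : forall n, 0 <= h n)
  (h_noninc : forall m n, (m <= n)%N -> h n <= h m) :
  ((forall x : R, 0 <= x -> (piQ Q2 x <= piQ Q1 x)%N) ->
     forall x : R, 0 <= x -> VQ Q2 h x <= VQ Q1 h x) /\
  (forall x0 : R,
     (forall x : R, x <= x0 -> (piQ Q2 x <= piQ Q1 x)%N) ->
     forall x : R, x <= x0 -> VQ Q2 h x <= VQ Q1 h x).
Proof.
split.
  move=> H x _; apply: perx => // m _; exact: H.
move=> x0 H x xx0; apply: perx => // m mx; apply: H; exact: le_trans mx xx0.
Qed.
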